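(* Let $K$ be a valued field with value group $\Gamma$, let $L$ be an immediate valued field extension of $K$, let $a\in L\setminus K$, and let $(a_\rho)$ be a pseudocauchy sequence in $K$ of transcendental type over $K$ with $a_\rho\leadsto a$. Put $\gamma_\rho=v(a-a_\rho)$. Let $R(X)\in K(X)\setminus K$. Then there is an index $\rho_0$ such that for $\rho>\rho_0$: (1) $R(a_\rho)$ is defined and lies in $K$; (2) $R(a_\rho)\leadsto R(a)$; (3) there are $\alpha\in\Gamma$ and $i\ge1$ such that eventually $v(R(a_\rho)-R(a))=\alpha+i\gamma_\rho$; (4) with $\alpha,i$ as in (3), $(\alpha+i\gamma_\rho)$ is eventually cofinal in $v(R(a)-K)$; (5) $(R(a_\rho))$ is a divergent pseudocauchy sequence in $K$; (6) with $\alpha,i$ as in (3), $v(R(a)-K)=(\alpha+i\,v(a-K))^{\downarrow}$.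
   Context: For a valued field $K$ with valuation $v:K\to\Gamma\cup\{\infty\}$, write $f\prec g$ iff $vf>vg$. A well-indexed sequence is one indexed by an infinite well-ordered set without greatest element. A well-indexed sequence $(a_\rho)$ pseudoconverges to $a$ (written $a_\rho\leadsto a$) if for some $\rho_0$, $a-a_\sigma\prec a-a_\rho$ whenever $\sigma>\rho>\rho_0$. $(a_\rho)$ is a pseudocauchy sequence if for some $\rho_0$, $a_\tau-a_\sigma\prec a_\sigma-a_\rho$ whenever $\tau>\sigma>\rho>\rho_0$; it is divergent in $K$ if it has no pseudolimit in $K$; it is of transcendental type over $K$ if for every nonconstant $P\in K[X]$, $v(P(a_\rho))$ is eventually constant. An immediate extension has the same value group and residue field. For $b\in L$, $v(b-K)=\{v(b-c):c\in K\}$; for $A\subseteq\Gamma$, $A^{\downarrow}=\{\delta\in\Gamma:\delta\le\sigma\text{ for some }\sigma\in A\}$, and $\alpha+iA=\{\alpha+i\sigma:\sigma\in A\}$. *)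

(* Defs.v *)
From HB Require Import structures.
From mathcomp Require Import all_boot all_order all_algebra.
Set Implicit Arguments. Unset Strict Implicit. Unset Printing Implicit Defensive.
Import Order.TTheory GRing.Theory Num.Theory.
Local Open Scope ring_scope.

Definition ordered_abgroup (G : porderZmodType) : Prop :=
  (forall x y : G, ((x <= y)%O || (y <= x)%O)) /\
  (forall x y z : G, (x <= y)%O -> (x + z <= y + z)%O).

Section ValuedFields.
Context {G : porderZmodType}.

(* Gamma ∪ {oo} is modelled by option G, with None = oo. *)
Definition vle (x y : option G) : bool :=
  match x, y with
  | _, None => true
  | None, Some _ => false
  | Some a, Some b => (a <= b)%O
  end.
Definition vlt (x y : option G) : bool := ~~ vle y x.
Definition vadd (x y : option G) : option G :=
  match x, y with Some a, Some b => Some (a + b) | _, _ => None end.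
Definition vmin (x y : option G) : option G := if vle x y then x else y.
Definition vnatmul (x : option G) (n : nat) : option G := omap (fun a => a *+ n) x.

Definition is_valuation (F : fieldType) (v : F -> option G) : Prop :=
  [/\ forall x, v x = None <-> x = 0,
      forall x y, v (x * y) = vadd (v x) (v y) &
      forall x y, vle (vmin (v x) (v y)) (v (x + y))].

Definition has_value_group (F : fieldType) (v : F -> option G) : Prop :=
  forall g : G, exists x, v x = Some g.

(* (L, vL) is an immediate valued field extension of (K, vK) via iota:
   vL extends vK, same value group, same residue field. *)
Definition immediate_ext (K L : fieldType) (iota : {rmorphism K -> L})
    (vK : K -> option G) (vL : L -> option G) : Prop :=
  [/\ forall x, vL (iota x) = vK x,
      forall y, y != 0 -> exists x, vL y = vK x &
      forall y, vle (Some 0) (vL y) -> exists x, vlt (Some 0) (vL (y - iota x))].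

Definition vprec (F : fieldType) (v : F -> option G) (f g : F) : bool :=
  vlt (v g) (v f).

Section Sequences.
Context {dI : Order.disp_t} {I : orderType dI}.

Definition pseudoconv (F : fieldType) (v : F -> option G) (s : I -> F) (a : F) : Prop :=
  exists r0 : I, forall r t : I, (r0 < r)%O -> (r < t)%O ->
    vprec v (a - s t) (a - s r).

Definition pseudocauchy (F : fieldType) (v : F -> option G) (s : I -> F) : Prop :=
  exists r0 : I, forall r t u : I, (r0 < r)%O -> (r < t)%O -> (t < u)%O ->
    vprec v (s u - s t) (s t - s r).

Definition divergent (F : fieldType) (v : F -> option G) (s : I -> F) : Prop :=
  ~ exists a : F, pseudoconv v s a.

Definition transc_type (K : fieldType) (v : K -> option G) (s : I -> K) : Prop :=
  forall P : {poly K}, (1 < size P)%N ->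
    exists (r0 : I) (g : option G), forall r : I, (r0 < r)%O -> v P.[s r] = g.

End Sequences.
End ValuedFields.

Definition well_indexed (dI : Order.disp_t) (I : orderType dI) : Prop :=
  [/\ inhabited I, forall i : I, exists j : I, (i < j)%O &
      well_founded (fun i j : I => (i < j)%O)].

(* Main.v *)
Require Import Defs.
From HB Require Import structures.
From mathcomp Require Import all_boot all_order all_algebra.
From Stdlib Require Import Classical.
From mathcomp Require Import ring.
Import Order.TTheory GRing.Theory.
Local Open Scope ring_scope.

Section OG.
Context {G : porderZmodType}.
Hypothesis HG : ordered_abgroup G.

Lemma og_total (x y : G) : (x <= y)%O \/ (y < x)%O.
Proof.
case: HG => Ht _; case Hxy: (x <= y)%O; first by left.
right; have := Ht x y; rewrite Hxy /= => Hyx.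
by rewrite lt_neqAle Hyx andbT; apply/negP => /eqP E; rewrite E lexx in Hxy.
Qed.

Lemma og_nle (x y : G) : ~~ (x <= y)%O -> (y < x)%O.
Proof. by move=> /negPf H; case: (og_total x y) => //; rewrite H. Qed.

Lemma og_leD2r {x y} (z : G) : (x <= y)%O -> (x + z <= y + z)%O.
Proof. by case: HG => _; apply. Qed.

Lemma og_leD2l {x y} (z : G) : (x <= y)%O -> (z + x <= z + y)%O.
Proof. by rewrite ![z + _]addrC; apply: og_leD2r. Qed.

Lemma og_ltD2r {x y} (z : G) : (x < y)%O -> (x + z < y + z)%O.
Proof.
rewrite !lt_neqAle => /andP [Hn Hl]; rewrite og_leD2r // andbT.
by apply: contra Hn => /eqP /addIr ->.
Qed.

Lemma og_ltD2l {x y} (z : G) : (x < y)%O -> (z + x < z + y)%O.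
Proof. by rewrite ![z + _]addrC; apply: og_ltD2r. Qed.

Lemma og_leD (x y z w : G) : (x <= y)%O -> (z <= w)%O -> (x + z <= y + w)%O.
Proof. move=> H1 H2; apply: le_trans (og_leD2r z H1) (og_leD2l y H2). Qed.

Lemma og_lteD (x y z w : G) : (x <= y)%O -> (z < w)%O -> (x + z < y + w)%O.
Proof. move=> H1 H2; apply: le_lt_trans (og_leD2r z H1) (og_ltD2l y H2). Qed.

Lemma og_leMn {x y : G} n : (x <= y)%O -> (x *+ n <= y *+ n)%O.
Proof.
move=> H; elim: n => [|n IH]; first by rewrite !mulr0n lexx.
by rewrite !mulrS; apply: og_leD.
Qed.

Lemma og_ltMn (x y : G) n : (x < y)%O -> (x *+ n.+1 < y *+ n.+1)%O.
Proof.
by move=> H; rewrite !mulrSr; apply: og_lteD (og_leMn n (ltW H)) H.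
Qed.

Lemma og_double0 (g : G) : g + g = 0 -> g = 0.
Proof.
move=> H; case: (og_total g 0) => Hg.
  case: (og_total 0 g) => Hg'; first by apply/eqP; rewrite eq_le Hg Hg'.
  have : (g + g < 0 + 0)%O by apply: og_lteD => //; exact: ltW.
  by rewrite H addr0 ltxx.
have : (0 + 0 < g + g)%O by apply: og_lteD => //; exact: ltW.
by rewrite H addr0 ltxx.
Qed.

End OG.

Section Val.
Context {G : porderZmodType}.
Hypothesis HG : ordered_abgroup G.
Context {F : fieldType}.
Context {v : F -> option G}.
Hypothesis Hv : is_valuation v.

Lemma v0 : v 0 = None.
Proof. by case: Hv => H _ _; apply/H. Qed.

Lemma v_fin {x : F} : x != 0 -> exists g, v x = Some g.
Proof.
case: Hv => H _ _ Hx; case E: (v x) => [g|]; first by exists g.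
by move/H: E => E; rewrite E eqxx in Hx.
Qed.

Lemma v_None {x : F} : v x = None -> x = 0.
Proof. by case: Hv => H _ _; move/H. Qed.

Lemma vM (x y : F) : v (x * y) = vadd (v x) (v y).
Proof. by case: Hv. Qed.

Lemma v1 : v 1 = Some 0.
Proof.
have [g Hg] := @v_fin 1 (oner_neq0 F).
have := vM 1 1; rewrite mulr1 Hg /= => -[] E.
have E' : g + g = g + 0 by rewrite addr0 -E.
by rewrite (addrI g E').
Qed.

Lemma vN1 : v (-1) = Some 0.
Proof.
have [g Hg] : exists g, v (-1) = Some g by apply: v_fin; rewrite oppr_eq0 oner_neq0.
have := vM (-1) (-1); rewrite mulrNN mulr1 Hg v1 /= => -[] E.
by rewrite (og_double0 HG _ (esym E)).
Qed.

Lemma vN (x : F) : v (- x) = v x.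
Proof. by rewrite -mulN1r vM vN1; case: (v x) => //= g; rewrite add0r. Qed.

Lemma vBC (x y : F) : v (x - y) = v (y - x).
Proof. by rewrite -vN opprB. Qed.

Lemma vV (x : F) g : v x = Some g -> v (x^-1) = Some (- g).
Proof.
move=> Hx; have x0 : x != 0 by apply/eqP => E; rewrite E v0 in Hx.
have [h Hh] : exists h, v x^-1 = Some h by apply: v_fin; rewrite invr_eq0.
have := vM x x^-1; rewrite mulfV // v1 Hx Hh /= => -[] E.
congr Some; apply: (addrI g); rewrite subrr; exact: esym E.
Qed.

Lemma vD (x y : F) : vle (vmin (v x) (v y)) (v (x + y)).
Proof. by case: Hv. Qed.

Lemma vD_lt (x y : F) : vlt (v x) (v y) -> v (x + y) = v x.
Proof.
rewrite /vlt; case Ex: (v x) => [gx|]; last by case: (v y).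
case Ey: (v y) => [gy|] /=; last first.
  by move=> _; rewrite (v_None Ey) addr0.
move=> /(og_nle HG) Hlt.
have H1 := vD x y; rewrite Ex Ey /vmin /= (ltW Hlt) /= in H1.
have H2 := vD (x + y) (- y); rewrite addrK vN Ey Ex in H2.
move: H1 H2; case: (v (x + y)) => [gz|] /= H1; last first.
  by move=> H; move: (lt_le_trans Hlt H); rewrite ltxx.
rewrite /vmin /=; case: ifP => /= Hzy H2.
  by congr Some; apply/eqP; rewrite eq_le H1 H2.
by move: (lt_le_trans Hlt H2); rewrite ltxx.
Qed.

End Val.

Section Idx.
Context {dI : Order.disp_t} {I : orderType dI}.

Lemma mxl {a b r : I} : (Order.max a b < r)%O -> (a < r)%O.
Proof. by rewrite gt_max => /andP []. Qed.
Lemma mxr {a b r : I} : (Order.max a b < r)%O -> (b < r)%O.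
Proof. by rewrite gt_max => /andP []. Qed.

Definition SI {G : porderZmodType} (f : I -> option G) :=
  exists r0, forall r t, (r0 < r)%O -> (r < t)%O -> vlt (f r) (f t).
Definition EC {G : porderZmodType} (f : I -> option G) :=
  exists r0 g, forall r, (r0 < r)%O -> f r = g.

Hypothesis HI : well_indexed I.

Lemma succI (i : I) : exists j, (i < j)%O.
Proof. by case: HI. Qed.

Lemma no_SI_EC {G : porderZmodType} (f : I -> option G) : SI f -> EC f -> False.
Proof.
move=> [r0 H1] [r1 [g H2]].
have [r Hr] := succI (Order.max r0 r1).
have [t Ht] := succI r.
have := H1 r t (mxl Hr) Ht.
rewrite (H2 r (mxr Hr)) (H2 t (lt_trans (mxr Hr) Ht)).
by rewrite /vlt; case: (g) => //= g'; rewrite lexx.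
Qed.

End Idx.

Section Taylor.
Context {G : porderZmodType}.
Hypothesis HG : ordered_abgroup G.
Context {dI : Order.disp_t} {I : orderType dI}.
Variable L : fieldType.
Variable vL : L -> option G.
Hypothesis HvL : is_valuation vL.
Variable d : I -> L.
Variable gm : I -> G.
Variable r0 : I.
Hypothesis Hd : forall r, (r0 < r)%O -> vL (d r) = Some (gm r).
Hypothesis Hgm : forall r t, (r0 < r)%O -> (r < t)%O -> (gm r < gm t)%O.

Lemma vlt_SS (x y : G) : (x < y)%O -> vlt (Some x) (Some y).
Proof. by move=> H; rewrite /vlt /= (lt_geF H). Qed.

Lemma taylor0 (T : {poly L}) : T != 0 -> exists (b : G) (i : nat) (r1 : I),
  (T`_0 = 0 -> (1 <= i)%N) /\
  forall r, (r1 < r)%O -> vL T.[d r] = Some (b + gm r *+ i).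
Proof.
elim/poly_ind: T => [|T c IH]; first by rewrite eqxx.
move=> HT.
have T0 : (T * 'X + c%:P)`_0 = c.
  by rewrite -horner_coef0 hornerMXaddC mulr0 add0r.
case/boolP: (T == 0) => [/eqP ET|NT].
  move: HT; rewrite ET mul0r add0r polyC_eq0 => Hc.
  have [gc Hgc] := v_fin HvL Hc.
  exists gc, 0%N, r0; split.
    by rewrite coefC /= => E; rewrite E eqxx in Hc.
  by move=> r _; rewrite hornerC mulr0n addr0.
have [b' [i' [r1' [_ IHv]]]] := IH NT.
set m := Order.max r0 r1'.
have Hm : forall r, (m < r)%O ->
    vL (T.[d r] * d r) = Some (b' + gm r *+ i'.+1).
  move=> r Hr; rewrite (vM HvL) (IHv r (mxr Hr)) (Hd r (mxl Hr)) /=.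
  by rewrite mulrSr addrA.
case/boolP: (c == 0) => [/eqP Ec|Nc].
  exists b', i'.+1, m; split => // r Hr.
  by rewrite hornerMXaddC Ec addr0 Hm.
have [gc Hgc] := v_fin HvL Nc.
case: (classic (exists r', (m < r')%O /\ (gc <= b' + gm r' *+ i'.+1)%O)).
  move=> [r' [Hr' Hle]].
  exists gc, 0%N, r'; split; first by rewrite T0 => E; rewrite E eqxx in Nc.
  move=> r Hr; rewrite hornerMXaddC mulr0n addr0 addrC (vD_lt HG HvL) ?Hgc //.
  rewrite (Hm r (lt_trans Hr' Hr)); apply: vlt_SS.
  apply: le_lt_trans Hle _; apply: (og_ltD2l HG).
  apply: (og_ltMn HG); exact: Hgm _ _ (mxl Hr') Hr.
move=> Hno; exists b', i'.+1, m; split => // r Hr.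
rewrite hornerMXaddC (vD_lt HG HvL) ?Hm // Hgc; apply: vlt_SS.
apply: (og_nle HG); apply/negP => Hle; apply: Hno; exists r; split => //.
Qed.

End Taylor.

Section VleT.
Context {G : porderZmodType}.
Hypothesis HG : ordered_abgroup G.

Lemma vle_total (x y : option G) : vle x y || vle y x.
Proof. by case: x; case: y => //= a b; case: HG => H _; apply: H. Qed.

Lemma vle_anti (x y : option G) : vle x y -> vle y x -> x = y.
Proof. by case: x; case: y => //= a b H1 H2; congr Some; apply/eqP; rewrite eq_le H1 H2. Qed.

Lemma vD_ne {F : fieldType} {v : F -> option G} (Hv : is_valuation v) (x y : F) :
  v x <> v y -> v (x + y) = vmin (v x) (v y).
Proof.
move=> Hne; rewrite /vmin; case H: (vle (v x) (v y)).
  apply: (vD_lt HG Hv); rewrite /vlt; apply/negP => H'; apply: Hne.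
  exact: vle_anti.
rewrite addrC; apply: (vD_lt HG Hv); by rewrite /vlt H.
Qed.

End VleT.

Section Main.
Context {G : porderZmodType}.
Hypothesis HG : ordered_abgroup G.
Context {K L : fieldType} {vK : K -> option G} {vL : L -> option G}
  {iota : {rmorphism K -> L}} {dI : Order.disp_t} {I : orderType dI}
  {a : L} {s : I -> K} {p q : {poly K}}.
Hypothesis HvK : is_valuation vK.
Hypothesis HvG : has_value_group vK.
Hypothesis HvL : is_valuation vL.
Hypothesis Himm : immediate_ext iota vK vL.
Hypothesis HI : well_indexed I.
Hypothesis Ha : ~ (exists x : K, a = iota x).
Hypothesis Htr : transc_type vK s.
Hypothesis Hpc : pseudoconv vL (fun r => iota (s r)) a.
Hypothesis HnC : ~ (exists c : K, p = c *: q).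
Hypothesis Hq : q != 0.

Lemma vi x : vL (iota x) = vK x.
Proof. by case: Himm. Qed.

Definition gm r := odflt 0 (vL (iota (s r) - a)).

Lemma vd r : vL (iota (s r) - a) = Some (gm r).
Proof.
rewrite /gm; case E: (vL _) => [g|] //=.
by move/(v_None HvL)/eqP: E; rewrite subr_eq0 => /eqP E; case: Ha; exists (s r).
Qed.

Lemma vd' r : vL (a - iota (s r)) = Some (gm r).
Proof. by rewrite (vBC HG HvL) vd. Qed.

Lemma gm_inc : exists r0, forall r t, (r0 < r)%O -> (r < t)%O -> (gm r < gm t)%O.
Proof.
case: Hpc => r0 H; exists r0 => r t H1 H2; have := H r t H1 H2.
by rewrite /vprec !vd' /vlt /= => /(og_nle HG).
Qed.

Lemma EC_K (P : {poly K}) : EC (fun r => vK P.[s r]).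
Proof.
rewrite /EC; case: (leqP (size P) 1) => Hs.
  case: HI => [[r0] _ _].
  exists r0, (vK P`_0); move=> r _; by rewrite [in LHS](size1_polyC Hs) hornerC.
by have [r0 [g H]] := Htr P Hs; exists r0, g.
Qed.

Lemma taylor_a (H : {poly L}) : H != 0 -> H.[a] = 0 ->
  exists (b : G) (i : nat) (r1 : I), (1 <= i)%N /\
    forall r, (r1 < r)%O -> vL H.[iota (s r)] = Some (b + gm r *+ i).
Proof.
move=> HH Ha0; have [r0 Hgm] := gm_inc.
pose T := H \Po ('X + a%:P).
have NT : T != 0.
  by rewrite -size_poly_eq0 size_comp_poly2 ?size_XaddC // size_poly_eq0.
have [b [i [r1 [Hi Hv]]]] :=
  @taylor0 G HG dI I L vL HvL (fun r => iota (s r) - a) gm r0 (fun r _ => vd r) Hgm T NT.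
exists b, i, r1; split.
  apply: Hi; rewrite -horner_coef0 horner_comp hornerD hornerX hornerC add0r //.
move=> r Hr; rewrite -(Hv r Hr) horner_comp hornerD hornerX hornerC subrK //.
Qed.


Lemma two_after (r1 r2 : I) : exists r t, [/\ (r1 < r)%O, (r2 < r)%O & (r < t)%O].
Proof.
have [r Hr] := succI HI (Order.max r1 r2); have [t Ht] := succI HI r.
by exists r, t; split => //; [exact: mxl Hr | exact: mxr Hr].
Qed.

Lemma SI_some (f : I -> G) (r0 : I) :
  (forall r t, (r0 < r)%O -> (r < t)%O -> (f r < f t)%O) -> SI (fun r => Some (f r)).
Proof. by move=> H; exists r0 => r t H1 H2; apply: vlt_SS; apply: H. Qed.

Lemma Pa (P : {poly K}) : (1 < size P)%N -> exists w,
  vL ((map_poly iota P).[a]) = Some w /\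
  exists r0, forall r, (r0 < r)%O -> vK P.[s r] = Some w.
Proof.
move=> HP; set pa := (map_poly iota P).[a].
pose H := map_poly iota P - pa%:P.
have NH : H != 0.
  apply/eqP => /subr0_eq E; move: HP; rewrite -(size_map_poly iota) E.
  by rewrite size_polyC; case: (pa != 0).
have Ha0 : H.[a] = 0 by rewrite /H hornerD hornerN hornerC subrr.
have [b [i [r1 [Hi Hv]]]] := taylor_a _ NH Ha0.
have [r0 Hgm] := gm_inc.
have Hev : forall r, (r1 < r)%O -> vL (iota P.[s r] - pa) = Some (b + gm r *+ i).
  by move=> r Hr; rewrite -horner_map -(Hv r Hr) /H hornerD hornerN hornerC.
have HSI : SI (fun r => vL (iota P.[s r] - pa)).
  clear Hv; case: i Hi Hev => // i _ Hev.
  exists (Order.max r0 r1) => r t H1 H2.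
  rewrite (Hev r (mxr H1)) (Hev t (lt_trans (mxr H1) H2)); apply: vlt_SS.
  apply: (og_ltD2l HG); apply: (og_ltMn HG); exact: Hgm _ _ (mxl H1) H2.
have [r2 [g Hg]] := EC_K P.
have Eg : g = vL pa.
  apply/eqP; apply/negPn/negP => /eqP Hne; apply: (no_SI_EC HI _ HSI).
  exists r2, (vmin g (vL pa)) => r Hr.
  by rewrite (vD_ne HG HvL) vN // vi Hg.
case Eg' : (g) => [w|].
  exists w; split; first by rewrite -Eg Eg'.
  by exists r2 => r Hr; rewrite Hg // Eg'.
have [r [t [Hr1 Hr2 _]]] := two_after r1 r2.
have Hpa : vL pa = None by rewrite -Eg Eg'.
have := Hev r Hr1; rewrite (v_None HvL Hpa) subr0.
have := Hg r Hr2; rewrite Eg' => /(v_None HvK) ->.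
by rewrite rmorph0 (v0 HvL).
Qed.

Lemma q_nz : exists w, vL ((map_poly iota q).[a]) = Some w /\
  exists r0, forall r, (r0 < r)%O -> vK q.[s r] = Some w.
Proof.
case: (leqP (size q) 1) => Hs; last exact: Pa.
have Eqq := size1_polyC Hs.
have Hc : q`_0 != 0 by rewrite -polyC_eq0 -Eqq.
have [w Hw] := v_fin HvK Hc.
exists w; split; first by rewrite Eqq map_polyC hornerC vi.
case: HI => [[r0] _ _]; exists r0 => r _; by rewrite Eqq hornerC.
Qed.


Definition qa := (map_poly iota q).[a].
Definition pa := (map_poly iota p).[a].

Lemma qa_nz : qa != 0.
Proof.
have [w [Hw _]] := q_nz; apply/eqP => E.
by move: Hw; rewrite /qa in E; rewrite E (v0 HvL).
Qed.

Lemma H_nz : qa *: map_poly iota p - pa *: map_poly iota q != 0.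
Proof.
apply/eqP => /subr0_eq E; apply: HnC.
have Ec j : qa * iota p`_j = pa * iota q`_j.
  by have := congr1 (fun P : {poly L} => P`_j) E; rewrite /= !coefZ !coef_map.
set k := (size q).-1.
have qk : q`_k != 0 by have := Hq; rewrite -lead_coef_eq0.
have iqk : iota q`_k != 0 by rewrite fmorph_eq0.
exists (p`_k / q`_k); apply/polyP => j; rewrite coefZ.
apply: (fmorph_inj iota); rewrite rmorphM fmorph_div.
apply: (mulfI qa_nz); by rewrite !mulrA !Ec (mulfK iqk).
Qed.

Lemma main_h : exists (al : G) (i : nat) (r1 : I), (1 <= i)%N /\
  forall r, (r1 < r)%O -> q.[s r] != 0 /\
    vL (iota (p.[s r] / q.[s r]) - pa / qa) = Some (al + gm r *+ i).
Proof.
have Ha0 : (qa *: map_poly iota p - pa *: map_poly iota q).[a] = 0.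
  by rewrite hornerD hornerN !hornerZ -/pa -/qa mulrC subrr.
have [b [i [r1 [Hi Hv]]]] := taylor_a _ H_nz Ha0.
have [w [Hw [rq Hqs]]] := q_nz.
exists (b - (w + w)), i, (Order.max r1 rq); split => // r Hr.
have Hqr := Hqs r (mxr Hr).
have qs0 : q.[s r] != 0 by apply/eqP => E; move: Hqr; rewrite E (v0 HvK).
split => //.
have iqs0 : iota q.[s r] != 0 by rewrite fmorph_eq0.
have qa0 := qa_nz.
have -> : iota (p.[s r] / q.[s r]) - pa / qa =
    (qa *: map_poly iota p - pa *: map_poly iota q).[iota (s r)] / (iota q.[s r] * qa).
  rewrite hornerD hornerN !hornerZ !horner_map fmorph_div.
  field; by rewrite iqs0 qa0.
have Hden : vL (iota q.[s r] * qa) = Some (w + w).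
  by rewrite (vM HvL) vi Hqr -/qa Hw.
rewrite (vM HvL) (Hv r (mxl Hr)) (vV HvL _ _ Hden) /=.
by congr Some; rewrite addrAC.
Qed.


Lemma main_sec :
  let Ra := (map_poly iota p).[a] / (map_poly iota q).[a] in
  let Rs := fun r : I => p.[s r] / q.[s r] in
  let gam := fun r : I => vL (a - iota (s r)) in
  (map_poly iota q).[a] != 0 /\
  exists r0 : I,
    (forall r : I, (r0 < r)%O -> q.[s r] != 0) /\
    pseudoconv vL (fun r => iota (Rs r)) Ra /\
    (exists (al : G) (i : nat), (1 <= i)%N /\
       (exists r1 : I, forall r : I, (r1 < r)%O ->
          vL (iota (Rs r) - Ra) = vadd (Some al) (vnatmul (gam r) i)) /\
       (exists r2 : I,
          (forall r : I, (r2 < r)%O -> exists c : K,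
              vL (Ra - iota c) = vadd (Some al) (vnatmul (gam r) i)) /\
          (forall c : K, exists r : I, (r2 < r)%O /\
              vle (vL (Ra - iota c)) (vadd (Some al) (vnatmul (gam r) i)))) /\
       (forall g : option G,
          (exists c : K, vL (Ra - iota c) = g) <->
          ((exists g' : G, g = Some g') /\
           exists c : K, vle g (vadd (Some al) (vnatmul (vL (a - iota c)) i))))) /\
    pseudocauchy vK Rs /\ divergent vK Rs.
Proof.
move=> Ra Rs gam.
have qanz := qa_nz.
have [al [i [r1 [Hi Hm]]]] := main_h.
have [r0g Hgm] := gm_inc.
set r0 := Order.max r1 r0g.
have Hh : forall r, (r0 < r)%O -> vL (iota (Rs r) - Ra) = Some (al + gm r *+ i).
  by move=> r Hr; exact: (Hm r (mxl Hr)).2.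
have Hh' : forall r, (r0 < r)%O -> vL (Ra - iota (Rs r)) = Some (al + gm r *+ i).
  by move=> r Hr; rewrite (vBC HG HvL) Hh.
have Hinc : forall r t, (r0 < r)%O -> (r < t)%O ->
    (al + gm r *+ i < al + gm t *+ i)%O.
  move=> r t H1 H2; case: i Hi {Hm Hh Hh'} => // i _.
  apply: (og_ltD2l HG); apply: (og_ltMn HG); exact: Hgm _ _ (mxr H1) H2.
have gamE r : gam r = Some (gm r) by exact: vd'.
have [w [Hw [rq Hqs]]] := q_nz.
have ECR : forall c, EC (fun r => vK (Rs r - c)).
  move=> c; have [rP [g HP]] := EC_K (p - c *: q).
  exists (Order.max rP rq), (vadd g (Some (- w))) => r Hr.
  have Hqr := Hqs r (mxr Hr).
  have qs0 : q.[s r] != 0 by apply/eqP => E; move: Hqr; rewrite E (v0 HvK).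
  have -> : Rs r - c = (p - c *: q).[s r] / q.[s r].
    rewrite /Rs hornerD hornerN hornerZ; field; by rewrite qs0.
  by rewrite (vM HvK) (HP r (mxl Hr)) (vV HvK _ _ Hqr).
have Rank : forall c r', exists r, (r' < r)%O /\
    vle (vL (Ra - iota c)) (Some (al + gm r *+ i)).
  move=> c r'; apply: NNPP => Hno.
  have key : forall r, (Order.max r' r0 < r)%O ->
      vK (Rs r - c) = Some (al + gm r *+ i).
    move=> r Hr; rewrite -vi rmorphB.
    have -> : iota (Rs r) - iota c = (iota (Rs r) - Ra) + (Ra - iota c).
      by rewrite addrA subrK.
    rewrite (vD_lt HG HvL) (Hh r (mxr Hr)) //.
    rewrite /vlt; apply/negP => Hle; apply: Hno; exists r; split => //.
    exact: mxl Hr.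
  apply: (no_SI_EC HI _ _ (ECR c)).
  exists (Order.max r' r0) => r t H1 H2.
  rewrite (key r H1) (key t (lt_trans H1 H2)); apply: vlt_SS.
  exact: Hinc (mxr H1) H2.
have Hcof : forall c r', exists r, (r' < r)%O /\
    vle (vL (a - iota c)) (Some (gm r)).
  move=> c r'; apply: NNPP => Hno.
  have key : forall r, (Order.max r' r0g < r)%O -> vK (s r - c) = Some (gm r).
    move=> r Hr; rewrite -vi rmorphB.
    have -> : iota (s r) - iota c = (iota (s r) - a) + (a - iota c).
      by rewrite addrA subrK.
    rewrite (vD_lt HG HvL) vd //.
    rewrite /vlt; apply/negP => Hle; apply: Hno; exists r; split => //.
    exact: mxl Hr.
  have [rP [g HP]] := EC_K ('X - c%:P).
  apply: (no_SI_EC HI (fun r => vK (s r - c))); last first.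
    by exists rP, g => r Hr; rewrite -(HP r Hr) hornerXsubC.
  exists (Order.max r' r0g) => r t H1 H2.
  rewrite (key r H1) (key t (lt_trans H1 H2)); apply: vlt_SS.
  exact: Hgm _ _ (mxr H1) H2.
split; first exact: qanz.
exists r0; split; first by move=> r Hr; exact: (Hm r (mxl Hr)).1.
split.
  exists r0 => r t H1 H2; rewrite /vprec (Hh' r H1) (Hh' t (lt_trans H1 H2)).
  by apply: vlt_SS; apply: Hinc.
split.
  exists al, i; split => //; split.
    by exists r0 => r Hr; rewrite gamE /= Hh.
  split.
    exists r0; split.
      by move=> r Hr; exists (Rs r); rewrite gamE Hh'.
    by move=> c; have [r [Hr Hle]] := Rank c r0; exists r; rewrite gamE.
  move=> g; split.
    move=> [c <-]; have [r [Hr Hle]] := Rank c r0; split.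
      by move: Hle; case: (vL (Ra - iota c)) => [g'|] //= _; exists g'.
    by exists (s r); rewrite vd'.
  move=> [[g' ->] [c Hc]].
  have [e He] : exists e, vL (a - iota c) = Some e.
    apply: (v_fin HvL); rewrite subr_eq0; apply/eqP => E; apply: Ha; by exists c.
  rewrite He /= in Hc.
  have [r [Hr Hle]] := Hcof c r0; rewrite He /= in Hle.
  have Hgh : (g' <= al + gm r *+ i)%O.
    apply: le_trans Hc _; apply: (og_leD2l HG); exact: (og_leMn HG).
  case: (eqVneq g' (al + gm r *+ i)) => [->|Hne].
    by exists (Rs r); rewrite Hh'.
  have Hlt : (g' < al + gm r *+ i)%O by rewrite lt_neqAle Hne Hgh.
  have [dd Hdd] := HvG g'.
  exists (Rs r + dd); rewrite rmorphD opprD addrA addrC (vD_lt HG HvL) (vN HG HvL) vi //.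
  by rewrite Hdd Hh' //; apply: vlt_SS.
have Hdiff : forall r t, (r0 < r)%O -> (r < t)%O ->
    vK (Rs t - Rs r) = Some (al + gm r *+ i).
  move=> r t H1 H2; rewrite -vi rmorphB.
  have -> : iota (Rs t) - iota (Rs r) = (Ra - iota (Rs r)) + (iota (Rs t) - Ra).
    by rewrite [RHS]addrC addrA subrK.
  rewrite (vD_lt HG HvL) (Hh' r H1) // (Hh t (lt_trans H1 H2)).
  by apply: vlt_SS; apply: Hinc.
split.
  exists r0 => r t u H1 H2 H3; rewrite /vprec (Hdiff r t H1 H2).
  rewrite (Hdiff t u (lt_trans H1 H2) H3); apply: vlt_SS; exact: Hinc H1 H2.
move=> [b [rb Hb]]; apply: (no_SI_EC HI _ _ (ECR b)).
exists rb => r t H1 H2; have := Hb r t H1 H2.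
by rewrite /vprec !(vBC HG HvK b).
Qed.

End Main.

Theorem lemma4p4 (G : porderZmodType) (K L : fieldType)
  (vK : K -> option G) (vL : L -> option G) (iota : {rmorphism K -> L})
  (dI : Order.disp_t) (I : orderType dI) (a : L) (s : I -> K)
  (R : {fraction {poly K}}) (p q : {poly K}) :
  ordered_abgroup G ->
  is_valuation vK -> has_value_group vK ->
  is_valuation vL -> immediate_ext iota vK vL ->
  well_indexed I ->
  ~ (exists x : K, a = iota x) ->
  pseudocauchy vK s -> transc_type vK s ->
  pseudoconv vL (fun r => iota (s r)) a ->
  ~ (exists c : K, R = tofrac c%:P) ->
  q != 0 -> coprimep p q -> R = tofrac p / tofrac q ->
  let Ra := (map_poly iota p).[a] / (map_poly iota q).[a] in
  let Rs := fun r : I => p.[s r] / q.[s r] in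
  let gam := fun r : I => vL (a - iota (s r)) in
  (map_poly iota q).[a] != 0 /\
  exists r0 : I,
    (forall r : I, (r0 < r)%O -> q.[s r] != 0) /\
    pseudoconv vL (fun r => iota (Rs r)) Ra /\
    (exists (al : G) (i : nat), (1 <= i)%N /\
       (exists r1 : I, forall r : I, (r1 < r)%O ->
          vL (iota (Rs r) - Ra) = vadd (Some al) (vnatmul (gam r) i)) /\
       (exists r2 : I,
          (forall r : I, (r2 < r)%O -> exists c : K,
              vL (Ra - iota c) = vadd (Some al) (vnatmul (gam r) i)) /\
          (forall c : K, exists r : I, (r2 < r)%O /\
              vle (vL (Ra - iota c)) (vadd (Some al) (vnatmul (gam r) i)))) /\
       (forall g : option G,
          (exists c : K, vL (Ra - iota c) = g) <->
          ((exists g' : G, g = Some g') /\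
           exists c : K, vle g (vadd (Some al) (vnatmul (vL (a - iota c)) i))))) /\
    pseudocauchy vK Rs /\ divergent vK Rs.
Proof.
move=> HG HvK HvG HvL Himm HI Ha _ Htr Hpc HR Hq _ HRpq.
have HnC : ~ (exists c : K, p = c *: q).
  move=> [c Ec]; apply: HR; exists c.
  by rewrite HRpq Ec -mul_polyC tofracM mulfK // tofrac_eq0.
have M := (main_sec HG HvK HvG HvL Himm HI Ha Htr Hpc HnC Hq). exact M.
Qed.
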